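(* Let $(K,D)$ be a differential field and $v$ a differential valuation on $(K,D)$. Then $D:(K,v)\to(K,v)$ is immediate if and only if $(K,D,v)$ admits asymptotic integration.
   Context: $C=\{a\in K: Da=0\}$ is the field of constants. A valuation $v$ of $K$ is a differential valuation (in the sense of Rosenlicht) if $v$ is trivial on $C$, for every $y\in K$ with $vy=0$ there is a unique $c\in C$ with $v(y-c)>0$, and for all $a,b\in K$ with $va\ge0$, $vb>0$, $b\ne0$: $v(bDa/Db)>0$. $(K,D,v)$ admits asymptotic integration if for every $a'\in K\setminus\{0\}$ there is $a\in K$ with $v(a'-Da)>va'$. $K$ is an ultrametric space with $u(a,b)=v(a-b)$; with $B(x,y)=\{z:v(x-z)\ge v(x-y)\}$, a point $z'$ is an attractor for a map $g$ if for every $y$ with $z'\ne gy$ there is $z$ with $v(gz-z')>v(gy-z')$ and $g(B(y,z))\subseteq B(gy,z')$; $g$ is immediate if every point is an attractor. *)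

(* Defs.v *)
From mathcomp Require Import all_boot all_order all_algebra.
Set Implicit Arguments. Unset Strict Implicit. Unset Printing Implicit Defensive.
Import GRing.Theory.
Local Open Scope ring_scope.

Definition ordered_abelian_group (G : zmodType) (le : rel G) : Prop :=
  [/\ reflexive le, antisymmetric le, transitive le, total le
    & forall x y z : G, le x y -> le (x + z) (y + z)].

(* Order on G ∪ {∞}, encoded as option G with None = ∞. *)
Definition leo (G : zmodType) (le : rel G) (x y : option G) : bool :=
  match x, y with
  | _, None => true
  | None, Some _ => false
  | Some a, Some b => le a b
  end.
Definition lto (G : zmodType) (le : rel G) (x y : option G) : bool :=
  ~~ leo le y x.

Definition oadd (G : zmodType) (x y : option G) : option G :=
  match x, y with
  | Some a, Some b => Some (a + b)
  | _, _ => None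
  end.

Definition is_valuation (K : fieldType) (G : zmodType) (le : rel G)
  (v : K -> option G) : Prop :=
  [/\ ordered_abelian_group le,
      forall x, v x = None <-> x = 0,
      forall x y, v (x * y) = oadd (v x) (v y),
      forall x y, leo le (if leo le (v x) (v y) then v x else v y) (v (x + y))
    & forall g : G, exists x, v x = Some g].

Definition is_derivation (K : fieldType) (D : K -> K) : Prop :=
  (forall x y, D (x + y) = D x + D y) /\
  (forall x y, D (x * y) = x * D y + D x * y).

(* Rosenlicht's differential valuation; C = {a | D a = 0}. *)
Definition differential_valuation (K : fieldType) (D : K -> K)
  (G : zmodType) (le : rel G) (v : K -> option G) : Prop :=
  [/\ forall c, D c = 0 -> c != 0 -> v c = Some 0,
      forall y, v y = Some 0 ->
        exists c, (D c = 0 /\ lto le (Some 0) (v (y - c))) /\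
          forall c', D c' = 0 /\ lto le (Some 0) (v (y - c')) -> c' = c
    & forall a b, leo le (Some 0) (v a) -> lto le (Some 0) (v b) -> b != 0 ->
        lto le (Some 0) (v (b * D a / D b))].

Definition asymptotic_integration (K : fieldType) (D : K -> K)
  (G : zmodType) (le : rel G) (v : K -> option G) : Prop :=
  forall a' : K, a' != 0 -> exists a, lto le (v a') (v (a' - D a)).

Definition ball (K : fieldType) (G : zmodType) (le : rel G)
  (v : K -> option G) (x y z : K) : bool :=
  leo le (v (x - y)) (v (x - z)).

Definition attractor (K : fieldType) (G : zmodType) (le : rel G)
  (v : K -> option G) (g : K -> K) (z' : K) : Prop :=
  forall y, z' != g y ->
    exists z, lto le (v (g y - z')) (v (g z - z')) /\
      forall w, ball le v y z w -> ball le v (g y) z' (g w).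

Definition immediate (K : fieldType) (G : zmodType) (le : rel G)
  (v : K -> option G) (g : K -> K) : Prop :=
  forall z', attractor le v g z'.

(* Main.v *)
Require Import Defs.
From mathcomp Require Import all_boot all_order all_algebra.
From mathcomp Require Import ring.
Set Implicit Arguments. Unset Strict Implicit. Unset Printing Implicit Defensive.
Import GRing.Theory.
Local Open Scope ring_scope.

Lemma leo_refl (G : zmodType) (le : rel G) : ordered_abelian_group le -> forall x, leo le x x.
Proof. by case=> r _ _ _ _ [x|] //=; apply: r. Qed.

Lemma leo_trans (G : zmodType) (le : rel G) : ordered_abelian_group le ->
  forall x y z, leo le x y -> leo le y z -> leo le x z.
Proof. by case=> _ _ t _ _ [x|] [y|] [z|] //=; apply: t. Qed.

Lemma leo_total (G : zmodType) (le : rel G) : ordered_abelian_group le ->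
  forall x y, leo le x y || leo le y x.
Proof. by case=> _ _ _ t _ [x|] [y|] //=; apply: t. Qed.

Lemma leo_anti (G : zmodType) (le : rel G) : ordered_abelian_group le ->
  forall x y, leo le x y -> leo le y x -> x = y.
Proof. by case=> _ a _ _ _ [x|] [y|] //= h1 h2; rewrite (a x y) ?h1. Qed.

Lemma lto_leo (G : zmodType) (le : rel G) : ordered_abelian_group le ->
  forall x y, lto le x y -> leo le x y.
Proof. move=> H x y; rewrite /lto; by case/orP: (leo_total H x y) => -> . Qed.

Lemma lto_leo_trans (G : zmodType) (le : rel G) : ordered_abelian_group le ->
  forall x y z, lto le x y -> leo le y z -> lto le x z.
Proof.
move=> H x y z; rewrite /lto => h1 h2; apply/negP => h3.
by move/negP: h1; apply; apply: leo_trans H _ _ _ h2 h3.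
Qed.

Lemma two_zero (G : zmodType) (le : rel G) : ordered_abelian_group le ->
  forall h : G, h + h = 0 -> h = 0.
Proof.
case=> r a t tot tr h hh; case/orP: (tot 0 h) => H.
- have := tr _ _ h H; rewrite add0r hh => H2; by apply: a; rewrite H H2.
- have := tr _ _ h H; rewrite add0r hh => H2; by apply: a; rewrite H H2.
Qed.

Lemma v0 (K : fieldType) (G : zmodType) (le : rel G) (v : K -> option G) :
  is_valuation le v -> v 0 = None.
Proof. by case=> _ h _ _ _; apply/h. Qed.

Lemma vSome (K : fieldType) (G : zmodType) (le : rel G) (v : K -> option G) :
  is_valuation le v -> forall x, x != 0 -> exists g, v x = Some g.
Proof.
case=> _ h _ _ _ x /eqP nx; case E: (v x) => [g|]; first by exists g.
by case: nx; apply/h.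
Qed.

Lemma v1 (K : fieldType) (G : zmodType) (le : rel G) (v : K -> option G) :
  is_valuation le v -> v 1 = Some 0.
Proof.
move=> Hv; have [g Hg] := vSome Hv (oner_neq0 K).
case: Hv => Ho _ m _ _; have := m 1 1; rewrite mulr1 Hg /= => [[]] e.
by rewrite -(addrK g g) -e subrr.
Qed.

Lemma vN (K : fieldType) (G : zmodType) (le : rel G) (v : K -> option G) :
  is_valuation le v -> forall x, v (- x) = v x.
Proof.
move=> Hv x.
have n1 : (-1 : K) != 0 by rewrite oppr_eq0 oner_neq0.
have [h Hh] := vSome Hv n1.
have h0 : h = 0.
  case: (Hv) => Ho _ m _ _; apply: (two_zero Ho).
  have := m (-1) (-1); rewrite mulrNN mulr1 (v1 Hv) Hh /=; by case.
case: (Hv) => _ _ m _ _; rewrite -mulN1r m Hh h0; case: (v x) => //= g; by rewrite add0r.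
Qed.

Lemma vmin (K : fieldType) (G : zmodType) (le : rel G) (v : K -> option G) :
  is_valuation le v -> forall a x y, leo le a (v x) -> leo le a (v y) -> leo le a (v (x + y)).
Proof.
move=> Hv a x y h1 h2; case: (Hv) => Ho _ _ u _; apply: (leo_trans Ho _ (u x y)).
by case: ifP.
Qed.

Lemma vinv (K : fieldType) (G : zmodType) (le : rel G) (v : K -> option G) :
  is_valuation le v -> forall x g, v x = Some g -> v x^-1 = Some (- g).
Proof.
move=> Hv x g Hg.
have nx : x != 0. apply/eqP => e; move: Hg; by rewrite e (v0 Hv).
have [h Hh] := vSome Hv (invr_neq0 nx).
case: (Hv) => _ _ m _ _; have := m x x^-1; rewrite divff // (v1 Hv) Hg Hh /= => [[]] e.
by congr Some; rewrite -[h](addKr g) -e addr0.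
Qed.

Lemma D0 (K : fieldType) (D : K -> K) : is_derivation D -> D 0 = 0.
Proof. case=> Da _; apply: (addrI (D 0)); by rewrite -Da !addr0. Qed.

Lemma DN (K : fieldType) (D : K -> K) : is_derivation D -> forall x, D (- x) = - D x.
Proof. move=> HD x; case: (HD) => Da _; apply: (addrI (D x)); by rewrite -Da !subrr (D0 HD). Qed.

Lemma DB (K : fieldType) (D : K -> K) : is_derivation D -> forall x y, D (x - y) = D x - D y.
Proof. move=> HD x y; case: (HD) => Da _; by rewrite Da (DN HD). Qed.

Lemma D1 (K : fieldType) (D : K -> K) : is_derivation D -> D 1 = 0.
Proof.
case=> _ Dm; have := Dm 1 1; rewrite !mulr1 !mul1r => h.
apply: (addrI (D 1)); by rewrite addr0 -{1}h.
Qed.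

Lemma Dinv (K : fieldType) (D : K -> K) : is_derivation D -> forall x, x != 0 ->
  D x^-1 = - D x / (x * x).
Proof.
move=> HD x nx; case: (HD) => _ Dm.
have h : x * D x^-1 + D x * x^-1 = 0 by rewrite -Dm divff // (D1 HD).
have -> : D x^-1 = x^-1 * (x * D x^-1) by rewrite mulrA mulVf // mul1r.
rewrite (_ : x * D x^-1 = - (D x * x^-1)); first by field.
by apply/eqP; rewrite -addr_eq0; apply/eqP.
Qed.

Lemma vdiv_ge0 (K : fieldType) (G : zmodType) (le : rel G) (v : K -> option G) :
  is_valuation le v -> forall f g gam, v g = Some gam -> leo le (v g) (v f) ->
  leo le (Some 0) (v (f / g)).
Proof.
move=> Hv f g gam Hg; case: (Hv) => [[_ _ _ _ tr] _ m _ _].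
rewrite m (vinv Hv Hg) Hg; case: (v f) => //= phi h.
by have := tr _ _ (- gam) h; rewrite subrr.
Qed.

Lemma mono (K : fieldType) (D : K -> K) (G : zmodType) (le : rel G) (v : K -> option G) :
  is_derivation D -> is_valuation le v -> differential_valuation D le v ->
  forall f g, g != 0 -> v g != Some 0 -> leo le (v g) (v f) -> leo le (v (D g)) (v (D f)).
Proof.
move=> HD Hv [dv1 _ dv3] f g ng vg0 hfg.
have [Ho _ m _ _] := Hv.
have Ho' := Ho; case: Ho' => r an _ tot tr.
have nDg : D g != 0 by apply/eqP => e; move/eqP: vg0; apply; apply: dv1.
have [gam Hg] := vSome Hv ng.
have hfg0 := vdiv_ge0 Hv Hg hfg.
have Dfg : D (f / g) = f * (- D g / (g * g)) + D f * g^-1.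
  by case: (HD) => _ Dm; rewrite Dm (Dinv HD ng).
have key : lto le (Some 0) (v (D f / D g - f / g)).
  case/orP: (tot 0 gam) => hg.
  - have pos : lto le (Some 0) (v g).
      rewrite Hg /lto /=; apply/negP => h; move/eqP: vg0; apply; rewrite Hg.
      by congr Some; apply: an; rewrite h hg.
    have := dv3 (f / g) g hfg0 pos ng.
    rewrite (_ : g * D (f / g) / D g = D f / D g - f / g) //.
    by rewrite Dfg; field; rewrite ng nDg.
  - have hng : ~~ le 0 gam.
      apply/negP => h; move/eqP: vg0; apply; rewrite Hg.
      by congr Some; apply: an; rewrite h hg.
    have pos : lto le (Some 0) (v g^-1).
      rewrite (vinv Hv Hg) /lto /=; apply/negP => h; move/negP: hng; apply.
      by have := tr _ _ gam h; rewrite addNr add0r.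
    have := dv3 (f / g) g^-1 hfg0 pos (invr_neq0 ng).
    rewrite (_ : g^-1 * D (f / g) / D g^-1 = - (D f / D g - f / g)) ?(vN Hv) //.
    by rewrite Dfg (Dinv HD ng); field; rewrite ng nDg oppr_eq0 nDg.
have h1 : leo le (Some 0) (v (D f / D g)).
  rewrite -(subrK (f / g) (D f / D g)); apply: (vmin Hv) => //.
  exact: lto_leo Ho _ _ key.
rewrite -[D f](divfK nDg) m.
have [eta He] := vSome Hv nDg; rewrite He.
move: h1; case: (v (D f / D g)) => //= del h.
by have := tr _ _ eta h; rewrite add0r.
Qed.

Lemma eqv (K : fieldType) (G : zmodType) (le : rel G) (v : K -> option G) :
  is_valuation le v -> forall x y, lto le (v x) (v (x - y)) -> v x = v y.
Proof.
move=> Hv x y h; have [Ho _ _ _ _] := Hv.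
have ex : x = y + (x - y) by rewrite addrC subrK.
apply: (leo_anti Ho).
  have -> : y = x + - (x - y) by rewrite opprB addrC subrK.
  apply: (vmin Hv); first exact: leo_refl Ho _.
  by rewrite (vN Hv); apply: lto_leo.
case/orP: (leo_total Ho (v y) (v (x - y))) => h2.
  by rewrite {1}ex; apply: (vmin Hv) => //; apply: (leo_refl Ho).
exfalso; move/negP: h; apply.
rewrite {2}ex; apply: (vmin Hv) => //; exact: (leo_refl Ho).
Qed.

Theorem proposition54 (K : fieldType) (D : K -> K) (G : zmodType)
  (le : rel G) (v : K -> option G) :
  is_derivation D -> is_valuation le v -> differential_valuation D le v ->
  (immediate le v D <-> asymptotic_integration D le v).
Proof.
move=> HD Hv Hdv; have [Ho _ _ _ _] := Hv; have [_ dv2 _] := Hdv.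
split.
  move=> Him a' na.
  have na' : a' != D 0 by rewrite (D0 HD).
  have [z [hz _]] := Him a' 0 na'.
  exists z; move: hz; rewrite (D0 HD) sub0r (vN Hv) -opprB (vN Hv) //.
move=> HAI z' y nz.
have na : z' - D y != 0 by rewrite subr_eq0.
have [a ha] := HAI _ na.
have Da0 : D a != 0.
  apply/eqP => e; move: ha; rewrite e subr0 /lto (leo_refl Ho) //.
have [a1 [na1 va1 Da1]] : exists a1, [/\ a1 != 0, v a1 != Some 0 & D a1 = D a].
  case E: (v a == Some 0).
    have [c [[Dc hc] _]] := dv2 a (eqP E).
    exists (a - c); split.
    - apply/eqP => e; move/eqP: Da0; apply.
      by rewrite -[a](subrK c) (proj1 HD) e (D0 HD) Dc addr0.
    - apply/eqP => e; move: hc; rewrite e /lto (leo_refl Ho) //.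
    - by rewrite (DB HD) Dc subr0.
  exists a; split => //; last by rewrite E.
  by apply/eqP => e; move/eqP: Da0; apply; rewrite e (D0 HD).
have hv := eqv Hv ha.
exists (y + a1); split.
  rewrite -opprB (vN Hv) (proj1 HD) Da1.
  have -> : D y + D a - z' = - (z' - D y - D a) by ring.
  by rewrite (vN Hv).
move=> w; rewrite /ball (_ : y - (y + a1) = - a1); last by ring.
rewrite (vN Hv) -(DB HD) -[D y - z']opprB (vN Hv) hv -Da1.
by apply: (mono HD Hv Hdv).
Qed.
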